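(* Let $p$ be a prime, $G$ a finitely generated group and $A\le \mathrm{Aut}(G)$ a subgroup. Then: (1) $\theta_1(A)\le\mathrm{Aut}(L_1^p(G))$ is a finite $p$-group if and only if $\theta_n(A)\le\mathrm{Aut}(L_n^p(G))$ is a finite $p$-group for every $n\ge1$; (2) $\theta_1(A)\le\mathrm{Aut}(L_1^p(G))$ is a finite $p$-group if and only if $\sigma_n(A)\le\mathrm{Aut}(G/\gamma_n^p(G))$ is a finite $p$-group for every $n\ge1$.
   Context: The lower $p$-central filtration of $G$ is $\gamma_1^p(G)=G$, $\gamma_{n+1}^p(G)=(\gamma_n^p(G))^p[G,\gamma_n^p(G)]$, where $H^p=\langle h^p: h\in H\rangle$ and $[H,K]=\langle hkh^{-1}k^{-1}: h\in H,k\in K\rangle$. Set $L_n^p(G)=\gamma_n^p(G)/\gamma_{n+1}^p(G)$. Each $\gamma_n^p(G)$ is characteristic in $G$, so there are natural homomorphisms $\theta_n:\mathrm{Aut}(G)\to\mathrm{Aut}(L_n^p(G))$ and $\sigma_n:\mathrm{Aut}(G)\to\mathrm{Aut}(G/\gamma_n^p(G))$ induced by restriction and passage to quotients. *)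

(* Defs.v *)
From HB Require Import structures.
From mathcomp Require Import all_boot.
From mathcomp Require Import boolp classical_sets cardinality.

Set Implicit Arguments.
Unset Strict Implicit.
Unset Printing Implicit Defensive.

Local Open Scope classical_set_scope.
Local Open Scope group_scope.

Section LowerPCentral.
Variable G : groupType.

Definition is_subgroup (H : set G) : Prop :=
  [/\ H 1, (forall x y, H x -> H y -> H (x * y)) & (forall x, H x -> H x^-1)].

Definition gen (S : set G) : set G :=
  fun x => forall H, is_subgroup H -> S `<=` H -> H x.

Definition finitely_generated : Prop :=
  exists s : seq G, gen [set x | x \in s] = setT.

Definition pow_sub (p : nat) (H : set G) : set G :=
  gen [set x ^+ p | x in H].

Definition comm_sub (H K : set G) : set G :=
  gen (fun z => exists h k, [/\ H h, K k & z = h * k * h^-1 * k^-1]).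

Definition prod_set (H K : set G) : set G :=
  fun z => exists h k, [/\ H h, K k & z = h * k].

(* lpc_aux p n = gamma_{n+1}^p(G) *)
Fixpoint lpc_aux (p : nat) (n : nat) : set G :=
  match n with
  | 0 => setT
  | m.+1 => prod_set (pow_sub p (lpc_aux p m)) (comm_sub setT (lpc_aux p m))
  end.

(* lpc p n = gamma_n^p(G) for n >= 1 (and lpc p 0 = G by convention) *)
Definition lpc (p n : nat) : set G := lpc_aux p n.-1.

Definition is_aut (f : G -> G) : Prop :=
  (forall x y, f (x * y) = f x * f y) /\ bijective f.

Definition aut_subgroup (A : set (G -> G)) : Prop :=
  [/\ A `<=` is_aut, A id,
      (forall f g, A f -> A g -> A (f \o g)) &
      (forall f, A f -> exists g, [/\ A g, cancel f g & cancel g f])].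

(* The element theta_n(f) of Aut(L_n^p(G)), L_n = gamma_n / gamma_{n+1}, is
   encoded by the map  x |-> theta_n(f)(x gamma_{n+1}) = f(x) gamma_{n+1}
   on x in gamma_n (cosets as subsets of G; the empty set off gamma_n).
   This encoding is injective, so theta_image p n A is in bijection with
   the group theta_n(A). *)
Definition theta_image (p n : nat) (A : set (G -> G)) : set (G -> set G) :=
  [set (fun x => [set y | lpc p n x /\ lpc p n.+1 ((f x)^-1 * y)]) | f in A].

(* Likewise sigma_n(f) in Aut(G / gamma_n) is encoded by
   x |-> sigma_n(f)(x gamma_n) = f(x) gamma_n. *)
Definition sigma_image (p n : nat) (A : set (G -> G)) : set (G -> set G) :=
  [set (fun x => [set y | lpc p n ((f x)^-1 * y)]) | f in A].

End LowerPCentral.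

Definition finite_pgroup {X : Type} (p : nat) (T : set X) : Prop :=
  exists k : nat, card_eq T `I_(p ^ k).

(* Main.v *)
Require Import Defs.
From HB Require Import structures.
From mathcomp Require Import all_boot.
From mathcomp Require Import boolp classical_sets cardinality.
From mathcomp Require Import fingroup perm.
From mathcomp Require Import pgroup cyclic.

Set Implicit Arguments.
Unset Strict Implicit.
Unset Printing Implicit Defensive.
Local Open Scope classical_set_scope.
Local Open Scope group_scope.


Ltac gfree := rewrite ?invg1 ?invgM ?invgK ?mulgA;
  repeat (rewrite ?invg1 ?mulgK ?mulgVK ?mulgV ?mulVg ?mul1g ?mulg1 ?mulgA).

Section Basic.
Variable G : groupType.
Definition sc (a b : G) := a^-1 * b^-1 * a * b.
Definition cj (u y : G) := y^-1 * u * y.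
Lemma hall_witt x y z : cj (sc (sc x y^-1) z) y * cj (sc (sc y z^-1) x) z * cj (sc (sc z x^-1) y) x = 1.
Proof. rewrite /cj /sc; gfree. done. Qed.

Implicit Types x y z g h : G.
Implicit Types H S T P C : set G.

Definition cm x y := x * y * x^-1 * y^-1.
Definition hom (f : G -> G) := forall x y, f (x * y) = f x * f y.
Definition normal (H : set G) :=
  is_subgroup H /\ forall g x, H x -> H (g * x * g^-1).

Lemma hom1 f : hom f -> f 1 = 1.
Proof. move=> hf; apply: (mulgI (f 1)); by rewrite -hf !mulg1. Qed.

Lemma homV f x : hom f -> f x^-1 = (f x)^-1.
Proof.
move=> hf; apply: (mulgI (f x)); by rewrite -hf !mulgV hom1.
Qed.

Lemma homX f x n : hom f -> f (x ^+ n) = (f x) ^+ n.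
Proof.
move=> hf; elim: n => [|n IH]; first by rewrite !expg0 hom1.
by rewrite !expgS hf IH.
Qed.

Lemma hom_cm f x y : hom f -> f (cm x y) = cm (f x) (f y).
Proof. move=> hf; rewrite /cm !hf. rewrite !(homV _ hf). by []. Qed.

Lemma conj_hom g : hom (fun x => g * x * g^-1).
Proof. by move=> x y; gfree. Qed.

Lemma hom_comp f f' : hom f -> hom f' -> hom (f \o f').
Proof. by move=> hf hf' x y /=; rewrite hf' hf. Qed.

Lemma hom_iter f n : hom f -> hom (iter n f).
Proof.
move=> hf; elim: n => [//|n IH] x y /=; by rewrite IH hf.
Qed.

Lemma sg1 H : is_subgroup H -> H 1. Proof. by case. Qed.
Lemma sgM H x y : is_subgroup H -> H x -> H y -> H (x * y).
Proof. by case=> _ hM _; apply: hM. Qed.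
Lemma sgV H x : is_subgroup H -> H x -> H x^-1.
Proof. by case=> _ _ hV; apply: hV. Qed.
Lemma sgVr H x : is_subgroup H -> H x^-1 -> H x.
Proof. by move=> sH /(sgV sH); rewrite invgK. Qed.
Lemma sgX H x n : is_subgroup H -> H x -> H (x ^+ n).
Proof.
move=> sH Hx; elim: n => [|n IH]; first by rewrite expg0; apply: sg1.
by rewrite expgS; apply: sgM.
Qed.

Lemma gen_sub S H : is_subgroup H -> S `<=` H -> gen S `<=` H.
Proof. by move=> sH SH x; apply. Qed.
Lemma sub_gen S : S `<=` gen S. Proof. by move=> x Sx H _; apply. Qed.
Lemma gen_subgroup S : is_subgroup (gen S).
Proof.
split; first by move=> H sH _; apply: sg1.
- by move=> x y gx gy H sH SH; apply: sgM => //; [apply: gx|apply: gy].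
- by move=> x gx H sH SH; apply: sgV => //; apply: gx.
Qed.

Lemma pre_subgroup f H : hom f -> is_subgroup H -> is_subgroup (fun x => H (f x)).
Proof.
move=> hf sH; split; first by rewrite hom1 //; apply: sg1.
- by move=> x y Hx Hy; rewrite hf; apply: sgM.
- by move=> x Hx; rewrite homV //; apply: sgV.
Qed.

Lemma gen_hom f S T : hom f -> (forall x, S x -> T (f x)) ->
  forall x, gen S x -> gen T (f x).
Proof.
move=> hf ST x gx; apply: (gen_sub (pre_subgroup hf (gen_subgroup T))) gx.
by move=> y Sy; apply: sub_gen; apply: ST.
Qed.

Lemma prod_normal P C : normal P -> normal C -> normal (prod_set P C).
Proof.
move=> [sP nP] [sC nC]; split; first split.
- by exists 1, 1; split; [apply: sg1|apply: sg1|rewrite mulg1].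
- move=> _ _ [h [k [Ph Ck ->]]] [h' [k' [Ph' Ck' ->]]].
  exists (h * h'), (h'^-1 * k * h'^-1^-1 * k'); split.
  + exact: sgM.
  + by apply: sgM => //; apply: nC.
  + by gfree.
- move=> _ [h [k [Ph Ck ->]]].
  exists h^-1, (h * k^-1 * h^-1); split.
  + exact: sgV.
  + by apply: nC; apply: sgV.
  + by gfree.
- move=> g _ [h [k [Ph Ck ->]]].
  exists (g * h * g^-1), (g * k * g^-1); split; [exact: nP|exact: nC|by gfree].
Qed.

Lemma normal_hom_inv H : is_subgroup H ->
  (forall f, hom f -> forall x, H x -> H (f x)) -> normal H.
Proof. by move=> sH inv; split=> // g x; apply: (inv _ (conj_hom g)). Qed.

Variable p : nat.
Notation N := (@lpc_aux G p).

Lemma N_props n : normal (N n) /\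
  (forall f, hom f -> forall x, N n x -> N n (f x)).
Proof.
elim: n => [|n [nN invN]].
  split; last by [].
  by split; first split.
have invP f : hom f -> forall x, pow_sub p (N n) x -> pow_sub p (N n) (f x).
  move=> hf; apply: gen_hom => // _ [y Ny <-].
  by exists (f y); [apply: invN|rewrite homX].
have invC f : hom f -> forall x, comm_sub setT (N n) x -> comm_sub setT (N n) (f x).
  move=> hf; apply: gen_hom => // _ [h [k [_ Nk ->]]].
  exists (f h), (f k); split => //; first exact: invN.
  by rewrite !hf !(homV _ hf).
have invNS f : hom f -> forall x, N n.+1 x -> N n.+1 (f x).
  move=> hf _ [h [k [Ph Ck ->]]]; exists (f h), (f k); split.
  + exact: invP.
  + exact: invC.
  + by rewrite hf.
split=> //; apply: prod_normal.
- by apply: normal_hom_inv; [exact: gen_subgroup|exact: invP].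
- by apply: normal_hom_inv; [exact: gen_subgroup|exact: invC].
Qed.

Lemma Nsg n : is_subgroup (N n). Proof. by case: (N_props n) => -[]. Qed.
Lemma Nnormal n g x : N n x -> N n (g * x * g^-1).
Proof. by move=> Nx; case: (N_props n) => -[_ nN] _; apply: nN. Qed.
Lemma Nhom n f x : hom f -> N n x -> N n (f x).
Proof. by move=> hf Nx; case: (N_props n) => _ inv; apply: inv. Qed.
Lemma N1 n : N n 1. Proof. exact: sg1 (Nsg n). Qed.
Lemma NM n x y : N n x -> N n y -> N n (x * y). Proof. exact: sgM (Nsg n). Qed.
Lemma NV n x : N n x -> N n x^-1. Proof. exact: sgV (Nsg n). Qed.
Lemma NVr n x : N n x^-1 -> N n x. Proof. exact: sgVr (Nsg n). Qed.
Lemma NX n x k : N n x -> N n (x ^+ k). Proof. exact: sgX (Nsg n). Qed.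
Lemma N0 x : N 0 x. Proof. by []. Qed.

Lemma Npow n x : N n x -> N n.+1 (x ^+ p).
Proof.
move=> Nx; exists (x ^+ p), 1; split; last by rewrite mulg1.
- by apply: sub_gen; exists x.
- exact: sg1 (gen_subgroup _).
Qed.

Lemma Ncm n g x : N n x -> N n.+1 (cm g x).
Proof.
move=> Nx; exists 1, (cm g x); split; last by rewrite mul1g.
- exact: sg1 (gen_subgroup _).
- by apply: sub_gen; exists g, x.
Qed.

Lemma cmV x y : (cm x y)^-1 = cm y x.
Proof. by rewrite /cm; gfree. Qed.

Lemma Ncm' n g x : N n x -> N n.+1 (cm x g).
Proof. by move=> /(Ncm g)/NV; rewrite cmV. Qed.

Lemma Nind n H : is_subgroup H ->
  (forall x, N n x -> H (x ^+ p)) -> (forall g x, N n x -> H (cm g x)) ->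
  N n.+1 `<=` H.
Proof.
move=> sH Hp Hc _ [h [k [Ph Ck ->]]]; apply: sgM => //.
- by apply: (gen_sub sH) Ph => _ [y Ny <-]; apply: Hp.
- by apply: (gen_sub sH) Ck => _ [g [y [_ Ny ->]]]; apply: Hc.
Qed.

Lemma Nsub n : N n.+1 `<=` N n.
Proof.
apply: Nind; first exact: Nsg.
- by move=> x Nx; apply: NX.
- move=> g x Nx; rewrite /cm; apply: NM; last exact: NV.
  exact: Nnormal.
Qed.


Definition eqm n x y := N n (x^-1 * y).

Lemma eqm_refl n x : eqm n x x.
Proof. by rewrite /eqm mulVg; apply: N1. Qed.
Lemma eqm_sym n x y : eqm n x y -> eqm n y x.
Proof. by move=> /NV; rewrite /eqm invgM invgK. Qed.
Lemma eqm_trans n x y z : eqm n x y -> eqm n y z -> eqm n x z.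
Proof.
move=> e1 e2; have := NM e1 e2; congr (N n _); by gfree.
Qed.
Lemma eqm_mul n x x' y y' : eqm n x x' -> eqm n y y' -> eqm n (x * y) (x' * y').
Proof.
move=> e1 e2; have := NM (Nnormal y^-1 e1) e2; rewrite /eqm; congr (N n _); by gfree.
Qed.
Lemma eqm_inv n x y : eqm n x y -> eqm n x^-1 y^-1.
Proof.
move=> e; have := Nnormal x (NV e); rewrite /eqm; congr (N n _); by gfree.
Qed.
Lemma eqm_hom n f x y : hom f -> eqm n x y -> eqm n (f x) (f y).
Proof. by move=> hf e; rewrite /eqm -(homV _ hf) -hf; apply: Nhom. Qed.
Lemma eqm_N n x y : eqm n x y -> N n x -> N n y.
Proof. by move=> e Nx; have := NM Nx e; rewrite mulgA mulgV mul1g. Qed.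
Lemma N_eqm n c : N n c -> eqm n 1 c.
Proof. by rewrite /eqm invg1 mul1g. Qed.
Lemma eqm_Nr n c : eqm n 1 c -> N n c.
Proof. by rewrite /eqm invg1 mul1g. Qed.
Lemma eqm_sub n x y : eqm n.+1 x y -> eqm n x y.
Proof. exact: Nsub. Qed.
Lemma eqm_rN n x c : N n c -> eqm n x (x * c).
Proof. by rewrite /eqm mulgA mulVg mul1g. Qed.
Lemma eqm_lN n x c : N n c -> eqm n (c * x) x.
Proof.
move=> Nc; have := Nnormal x^-1 (NV Nc); rewrite /eqm; congr (N n _); by gfree.
Qed.
Lemma eqm_0 x y : eqm 0 x y. Proof. by []. Qed.

Lemma central n g c : N n.+1 c -> eqm n.+2 (g * c) (c * g).
Proof.
move=> Nc; have := Ncm' g^-1 (NV Nc); rewrite /eqm /cm; congr (N _ _); by gfree.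
Qed.

Lemma central_conj n g c : N n.+1 c -> eqm n.+2 (g * c * g^-1) c.
Proof.
move=> Nc; have := Ncm g (NV Nc); rewrite /eqm /cm; congr (N _ _); by gfree.
Qed.

Lemma powK n h c k : N n.+1 c -> eqm n.+2 ((h * c) ^+ k) (h ^+ k * c ^+ k).
Proof.
move=> Nc; elim: k => [|k IH]; first by rewrite !expg0 mulg1; apply: eqm_refl.
rewrite !expgSr.
have e1 := eqm_mul IH (eqm_refl n.+2 (h * c)).
apply: (eqm_trans e1).
have e2 : eqm n.+2 (c ^+ k * h) (h * c ^+ k).
  by apply: eqm_sym; apply: central; apply: NX.
have := eqm_mul (eqm_mul (eqm_refl _ (h ^+ k)) e2) (eqm_refl _ c).
by rewrite !mulgA.
Qed.

Lemma powK' n h c : N n.+1 c -> eqm n.+2 ((h * c) ^+ p) (h ^+ p).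
Proof.
move=> Nc; apply: (eqm_trans (powK h p Nc)).
apply: eqm_sym; apply: eqm_rN; apply: Npow; exact: Nc.
Qed.

Lemma cm_right n x y c : N n.+1 c -> eqm n.+2 (cm x (y * c)) (cm x y).
Proof.
move=> Nc; have -> : cm x (y * c) = (x * y) * cm c x^-1 * (x * y)^-1 * cm x y.
  by rewrite /cm; gfree.
by apply: eqm_lN; apply: Nnormal; apply: Ncm'.
Qed.

Lemma cm_left_id g a h : cm (g * a) h = g * cm a h * g^-1 * cm g h.
Proof. by rewrite /cm; gfree. Qed.

Lemma cm_inv_id a h : cm a^-1 h = a^-1 * (cm a h)^-1 * a^-1^-1.
Proof. by rewrite /cm; gfree. Qed.

Lemma cm1 h : cm 1 h = 1. Proof. by rewrite /cm; gfree. Qed.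

Lemma cm_sc a b : cm a b = sc a^-1 b^-1.
Proof. by rewrite /cm /sc; gfree. Qed.

Lemma scV a b : (sc a b)^-1 = sc b a.
Proof. by rewrite /sc; gfree. Qed.

Lemma sc_Nl n w y : N n w -> N n.+1 (sc w y).
Proof. by move=> Nw; have := Ncm' y^-1 (NV Nw); rewrite cm_sc !invgK. Qed.

Lemma sc_Nr n w y : N n w -> N n.+1 (sc y w).
Proof. by move=> Nw; have := Ncm y^-1 (NV Nw); rewrite cm_sc !invgK. Qed.

Lemma cjK u y : y * cj u y * y^-1 = u.
Proof. by rewrite /cj; gfree. Qed.

Lemma Ncj n u y : N n u -> N n (cj u y).
Proof. by move=> /(Nnormal y^-1); rewrite invgK. Qed.

Lemma hw_N n x y z : N n (sc (sc y z^-1) x) -> N n (sc (sc z x^-1) y) ->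
  N n (sc (sc x y^-1) z).
Proof.
move=> NU NV'; have hw := hall_witt x y z.
have : N n (cj (sc (sc x y^-1) z) y).
  have -> : cj (sc (sc x y^-1) z) y =
    (cj (sc (sc y z^-1) x) z * cj (sc (sc z x^-1) y) x)^-1.
    by apply: (mulIg (cj (sc (sc y z^-1) x) z * cj (sc (sc z x^-1) y) x));
       rewrite mulVg -hw !mulgA.
  apply: NV; apply: NM.
  - exact: Ncj.
  - exact: Ncj.
by move=> /(Nnormal y); rewrite cjK.
Qed.

Lemma K3 j a h : N 1 a -> N j h -> N j.+2 (cm a h).
Proof.
pose H := fun a => forall h, N j h -> N j.+2 (cm a h).
have sH : is_subgroup H.
  split.
  - by move=> h0 _; rewrite cm1; apply: N1.
  - move=> a1 a2 H1 H2 h0 Nh; rewrite cm_left_id; apply: NM; last exact: H1.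
    by apply: Nnormal; apply: H2.
  - move=> a1 H1 h0 Nh; rewrite cm_inv_id; apply: Nnormal; apply: NV; exact: H1.
move=> Na; move: a Na h; apply: (Nind sH).
- move=> x _ h Nh.
  have e : forall k, eqm j.+2 (cm (x ^+ k) h) ((cm x h) ^+ k).
    elim=> [|k IH]; first by rewrite expg0 cm1; apply: eqm_refl.
    rewrite expgS cm_left_id expgSr; apply: eqm_mul; last exact: eqm_refl.
    apply: eqm_trans IH; apply: central_conj; exact: Ncm.
  apply: (eqm_N (eqm_sym (e p))); apply: Npow; exact: Ncm.
- move=> g x _ h Nh.
  rewrite cm_sc -(invgK (cm g x)) cm_sc scV invgK.
  apply: (hw_N (y := g)).
  + by apply: sc_Nl; rewrite invgK; apply: sc_Nr.
  + by rewrite invgK; apply: sc_Nl; apply: sc_Nl; apply: NV.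
Qed.

Lemma Tn f : hom f -> (forall x, eqm 1 x (f x)) ->
  forall n x, N n x -> eqm n.+1 x (f x).
Proof.
move=> hf h1; elim=> [|n IH]; first by move=> x _; apply: h1.
pose H := fun x => N n.+1 x /\ eqm n.+2 x (f x).
have sH : is_subgroup H.
  split.
  - by split; [apply: N1 | rewrite hom1 //; apply: eqm_refl].
  - move=> x y [Nx ex] [Ny ey]; split; first exact: NM.
    by rewrite hf; apply: eqm_mul.
  - move=> x [Nx ex]; split; first exact: NV.
    by rewrite homV //; apply: eqm_inv.
move=> x Nx; have [] : H x; last by [].
apply: (Nind sH) Nx.
- move=> y Ny; split; first exact: Npow.
  rewrite homX //.
  have -> : f y = y * (y^-1 * f y) by rewrite mulgA mulgV mul1g.
  apply: eqm_sym; apply: powK'; exact: IH.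
- move=> g y Ny; split; first exact: Ncm.
  rewrite hom_cm //.
  have -> : f y = y * (y^-1 * f y) by rewrite mulgA mulgV mul1g.
  have -> : f g = g * (g^-1 * f g) by rewrite mulgA mulgV mul1g.
  apply: eqm_sym; apply: (eqm_trans (cm_right _ _ (IH _ Ny))).
  rewrite cm_left_id; apply: eqm_lN; apply: Nnormal; apply: K3 => //; exact: h1.
Qed.

Lemma eqm_X n x y k : eqm n x y -> eqm n (x ^+ k) (y ^+ k).
Proof.
move=> e; elim: k => [|k IH]; first by rewrite !expg0; apply: eqm_refl.
by rewrite !expgS; apply: eqm_mul.
Qed.

Lemma Vp f j : hom f -> (forall x, eqm 1 x (f x)) ->
  (forall x, eqm j.+1 x (f x)) -> forall x, eqm j.+2 x (iter p f x).
Proof.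
move=> hf h1 hj x.
have Nc : N j.+1 (x^-1 * f x) := hj x.
move: (x^-1 * f x) Nc (mulVKg x (f x)) => c Nc fx.
have e : forall k, eqm j.+2 (iter k f x) (x * c ^+ k).
  elim=> [|k IH]; first by rewrite expg0 mulg1; apply: eqm_refl.
  rewrite iterS; apply: (eqm_trans (eqm_hom hf IH)).
  rewrite hf homX // -fx expgS mulgA.
  apply: eqm_mul; first exact: eqm_refl.
  by apply: eqm_X; apply: eqm_sym; apply: (Tn hf h1).
apply: (eqm_trans (eqm_rN x (Npow Nc))); exact: eqm_sym.
Qed.

Lemma iter_mul (T : Type) a b (f : T -> T) (x : T) :
  iter (a * b) f x = iter a (iter b f) x.
Proof. by elim: a => [//|a IH]; rewrite mulSn iterD IH. Qed.

Lemma iter_triv (g : G -> G) : (forall x, eqm 1 x (g x)) -> forall k x, eqm 1 x (iter k g x).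
Proof.
move=> h1; elim=> [|k IH] x; first exact: eqm_refl.
by rewrite iterS; apply: eqm_trans (IH x) (h1 _).
Qed.

Lemma Uiter (g : G -> G) : hom g -> (forall x, eqm 1 x (g x)) ->
  forall j x, eqm j.+1 x (iter (p ^ j) g x).
Proof.
move=> hg h1; elim=> [|j IH] x; first by rewrite expn0; apply: h1.
rewrite expnS iter_mul; apply: Vp => //.
- exact: hom_iter.
- exact: iter_triv.
Qed.

Fixpoint prods (F : seq G) : seq G :=
  if F is f :: F' then [seq f ^+ e * y | e <- iota 0 p, y <- prods F'] else [:: 1].

Lemma prods1 F : 0 < p -> 1 \in prods F.
Proof.
move=> p0; elim: F => [|f F IH] /=; first by rewrite inE.
suff : f ^+ 0 * 1 \in [seq f ^+ e * y | e <- iota 0 p, y <- prods F].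
  by rewrite expg0 mulg1.
by apply: allpairs_f => //; rewrite mem_iota.
Qed.

Lemma prods_mem F f : 1 < p -> f \in F -> f \in prods F.
Proof.
move=> p1; elim: F => [//|f' F IH] /=; rewrite inE => /predU1P [->|fF].
  suff : f' ^+ 1 * 1 \in [seq f' ^+ e * y | e <- iota 0 p, y <- prods F].
    by rewrite expg1 mulg1.
  apply: allpairs_f; first by rewrite mem_iota.
  by apply: prods1; apply: ltnW.
suff : f' ^+ 0 * f \in [seq f' ^+ e * y | e <- iota 0 p, y <- prods F].
  by rewrite expg0 mul1g.
by apply: allpairs_f; [rewrite mem_iota; apply: ltnW|apply: IH].
Qed.

Lemma prods_N m F : (forall f, f \in F -> N m f) -> forall y, y \in prods F -> N m y.
Proof.
elim: F => [_ y|f F IH hF y] /=; first by rewrite inE => /eqP ->; apply: N1.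
move=> /allpairsP [[e z] /= [_ zF ->]]; apply: NM.
- by apply: NX; apply: hF; rewrite inE eqxx.
- by apply: IH => // f' f'F; apply: hF; rewrite inE f'F orbT.
Qed.

Lemma comm_m m a b : N m a -> N m b -> eqm m.+1 (a * b) (b * a).
Proof.
move=> Na Nb; have := Ncm b^-1 (NV Na); rewrite /eqm /cm; congr (N _ _); by gfree.
Qed.

Lemma powmod m f e : N m f -> eqm m.+1 (f ^+ e) (f ^+ (e %% p)).
Proof.
move=> Nf; rewrite {1}(divn_eq e p) expgnDr mulnC expgnA.
by apply: eqm_lN; apply: NX; apply: Npow.
Qed.

Lemma prods_mul m F : 0 < p -> (forall f, f \in F -> N m f) ->
  forall y y', y \in prods F -> y' \in prods F ->
  exists2 z, z \in prods F & eqm m.+1 (y * y') z.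
Proof.
move=> p0; elim: F => [_ y y'|f F IH hF y y'] /=.
  rewrite !inE => /eqP -> /eqP ->; exists 1; first by rewrite inE.
  by rewrite mulg1; apply: eqm_refl.
have hF' : forall f', f' \in F -> N m f'.
  by move=> f' f'F; apply: hF; rewrite inE f'F orbT.
have Nf : N m f by apply: hF; rewrite inE eqxx.
move=> /allpairsP [[e w] /= [_ wF ->]] /allpairsP [[e' w'] /= [_ w'F ->]].
have [z' z'F ez'] := IH hF' w w' wF w'F.
exists (f ^+ ((e + e') %% p) * z').
  by apply: allpairs_f => //; rewrite mem_iota ltn_pmod.
have e1 : eqm m.+1 (f ^+ e * w * (f ^+ e' * w')) (f ^+ e * f ^+ e' * (w * w')).
  rewrite !mulgA; apply: eqm_mul; last exact: eqm_refl.
  rewrite -!mulgA; apply: eqm_mul; first exact: eqm_refl.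
  apply: comm_m; [exact: prods_N wF | exact: NX].
apply: (eqm_trans e1); rewrite -expgnDr; apply: eqm_mul => //.
exact: powmod.
Qed.

Definition Wset m F : set G := fun x => exists2 y, y \in prods F & eqm m.+1 y x.

Lemma W_eqm m F x x' : Wset m F x -> eqm m.+1 x x' -> Wset m F x'.
Proof. by move=> [y yF e] e'; exists y => //; apply: eqm_trans e'. Qed.

Lemma W_sub m F : 1 < p -> (forall f, f \in F -> N m f) -> is_subgroup (Wset m F).
Proof.
move=> p1 hF; have p0 : 0 < p by apply: ltnW.
have W1 : Wset m F 1 by exists 1; [apply: prods1|apply: eqm_refl].
have WM : forall x y, Wset m F x -> Wset m F y -> Wset m F (x * y).
  move=> x y [u uF eu] [v vF ev].
  have [z zF ez] := prods_mul p0 hF uF vF.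
  by exists z => //; apply: eqm_trans (eqm_sym ez) (eqm_mul eu ev).
split => // x [y yF ey].
have WX : forall k, Wset m F (y ^+ k).
  elim=> [|k IH]; first by rewrite expg0.
  by rewrite expgS; apply: WM => //; exists y => //; apply: eqm_refl.
apply: (W_eqm (WX p.-1)); apply: eqm_trans (eqm_inv ey).
apply: eqm_sym; rewrite /eqm invgK -expgS prednK //; apply: Npow; exact: prods_N yF.
Qed.

Lemma F_in_W m F f : 1 < p -> f \in F -> Wset m F f.
Proof. by move=> p1 fF; exists f; [apply: prods_mem|apply: eqm_refl]. Qed.

Lemma layer (s : seq G) : 1 < p -> gen [set x | x \in s] = setT ->
  forall m, exists t : seq G, (forall u, u \in t -> N m u) /\
    (forall h, N m h -> exists2 u, u \in t & eqm m.+1 u h).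
Proof.
move=> p1 hs; have p0 : 0 < p by apply: ltnW.
have allg : forall H, is_subgroup H -> (forall g, g \in s -> H g) -> forall g, H g.
  move=> H sH Hs g; have : gen [set x | x \in s] g by rewrite hs.
  by apply: (gen_sub sH) => x /= /Hs.
elim=> [|m [t [tN tcov]]].
  exists (prods s); split; first by [].
  move=> h _; apply: (allg _ (W_sub p1 (m := 0) (fun _ _ => I))) => g gs.
  exact: F_in_W.
pose F := [seq u ^+ p | u <- t] ++ [seq cm g u | g <- s, u <- t].
have FN : forall f, f \in F -> N m.+1 f.
  move=> f; rewrite mem_cat => /orP [/mapP [u ut ->]|/allpairsP [[g u] /= [_ ut ->]]].
  - by apply: Npow; apply: tN.
  - by apply: Ncm; apply: tN.
have sW := W_sub p1 FN.
exists (prods F); split; first exact: prods_N.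
apply: (Nind sW).
- move=> h Nh; have [u ut eu] := tcov h Nh.
  have Nc0 : N m.+1 (u^-1 * h) := eu.
  move: (u^-1 * h) Nc0 (mulVKg u h) => c Nc <-.
  apply: (W_eqm (x := u ^+ p)).
    by apply: F_in_W => //; rewrite mem_cat (map_f (fun u => u ^+ p)) ?ut.
  exact: eqm_sym (powK' u Nc).
- move=> g h Nh; have [u ut eu] := tcov h Nh.
  have Nc0 : N m.+1 (u^-1 * h) := eu.
  move: (u^-1 * h) Nc0 (mulVKg u h) => c Nc <-.
  apply: (W_eqm (x := cm g u)); last exact: eqm_sym (cm_right g u Nc).
  have Nu := tN u ut.
  move: g; apply: allg; last first.
    by move=> g gs; apply: F_in_W => //; rewrite mem_cat allpairs_f ?orbT.
  split; first by rewrite cm1; apply: sg1.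
  + move=> a b Wa Wb; rewrite cm_left_id; apply: (W_eqm (x := cm b u * cm a u)).
      exact: sgM.
    apply: eqm_mul; last exact: eqm_refl.
    by apply: eqm_sym; apply: central_conj; apply: Ncm.
  + move=> a Wa; rewrite cm_inv_id; apply: (W_eqm (x := (cm a u)^-1)).
      exact: sgV.
    by apply: eqm_sym; apply: central_conj; apply: NV; apply: Ncm.
Qed.

Lemma cover (s : seq G) : 1 < p -> gen [set x | x \in s] = setT ->
  forall m, exists r : seq G, forall x, exists2 y, y \in r & eqm m y x.
Proof.
move=> p1 hs; elim=> [|m [r hr]]; first by exists [:: 1] => x; exists 1; rewrite ?inE.
have [t [tN tcov]] := layer p1 hs m.
exists [seq a * u | a <- r, u <- t] => x.
have [a ar ea] := hr x; have [u ut eu] := tcov _ ea.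
exists (a * u); first exact: allpairs_f.
by rewrite /eqm invgM -mulgA.
Qed.

End Basic.


Local Open Scope card_scope.

Section PermModel.
Variable G : groupType.
Variable p m : nat.
Variable P : set G.
Variable r0 : seq G.
Hypothesis hr : forall x, exists2 y, y \in r0 & eqm p m y x.
Variable A : set (G -> G).
Hypothesis hA : aut_subgroup A.
Hypothesis hP1 : forall x y, eqm p m x y -> P x -> P y.
Hypothesis hP2 : forall f, A f -> forall x, P x -> P (f x).

Local Notation k := (size r0).+1.
Definition sv (i : 'I_k) : G := nth 1 (1 :: r0) i.
Definition idx (x : G) : 'I_k := odflt ord0 [pick i | `[< eqm p m (sv i) x >]].

Lemma idx_ex x : exists i, eqm p m (sv i) x.
Proof.
have [y yr e] := hr x.
have yr' : y \in 1 :: r0 by rewrite inE yr orbT.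
exists (Ordinal (etrans (index_mem y (1 :: r0)) yr')).
by rewrite /sv /= nth_index.
Qed.

Lemma idxP x : eqm p m (sv (idx x)) x.
Proof.
rewrite /idx; case: pickP => [i /asboolP //|none].
by have [i e] := idx_ex x; move: (none i) => /asboolP.
Qed.

Lemma idx_eq x y : eqm p m x y -> idx x = idx y.
Proof.
move=> e; rewrite /idx; congr odflt; apply: eq_pick => i.
apply/asboolP/asboolP => e'; first exact: eqm_trans e' e.
exact: eqm_trans e' (eqm_sym e).
Qed.

Lemma idx_eqm x y : idx x = idx y -> eqm p m x y.
Proof.
move=> e; apply: eqm_trans (eqm_sym (idxP x)) _; rewrite e; exact: idxP.
Qed.

Lemma idx_sv x : idx (sv (idx x)) = idx x.
Proof. exact: idx_eq (idxP x). Qed.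

Definition canon (i : 'I_k) := (idx (sv i) == i) && `[< P (sv i) >].
Definition pf (f : G -> G) (i : 'I_k) := if canon i then idx (f (sv i)) else i.
Definition pi (f : G -> G) : {perm 'I_k} :=
  match pselect (injective (pf f)) with left h => perm h | right _ => 1 end.

Lemma A_hom f : A f -> hom f.
Proof. by case: hA => sub _ _ _ /sub []. Qed.

Lemma A_eqm f x y : A f -> eqm p m (f x) (f y) -> eqm p m x y.
Proof.
move=> Af e; case: hA => _ _ _ /(_ f Af) [g [Ag fK _]].
by have := eqm_hom (A_hom Ag) e; rewrite !fK.
Qed.

Lemma canon_idx f i : A f -> canon i -> canon (idx (f (sv i))).
Proof.
move=> Af /andP [_ /asboolP Pi]; rewrite /canon idx_sv eqxx /=.
apply/asboolP; apply: hP1 (eqm_sym (idxP _)) _; exact: hP2.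
Qed.

Lemma canonE x : P x -> canon (idx x).
Proof.
move=> Px; rewrite /canon idx_sv eqxx /=; apply/asboolP.
exact: hP1 (eqm_sym (idxP _)) Px.
Qed.

Lemma pf_inj f : A f -> injective (pf f).
Proof.
move=> Af i j; rewrite /pf.
case ci: (canon i); case cj: (canon j) => // e.
- move: ci cj => /andP [/eqP ci _] /andP [/eqP cj _].
  by rewrite -ci -cj; apply: idx_eq; apply: (A_eqm Af); apply: idx_eqm.
- by move: (canon_idx Af ci); rewrite e cj.
- by move: (canon_idx Af cj); rewrite -e ci.
Qed.

Lemma piE f i : A f -> pi f i = pf f i.
Proof.
move=> Af; rewrite /pi; case: pselect => [h|/(_ (pf_inj Af))//].
by rewrite permE.
Qed.

Lemma A_comp f g : A f -> A g -> A (f \o g).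
Proof. by case: hA => _ _ hc _; apply: hc. Qed.

Lemma A_id : A id. Proof. by case: hA. Qed.

Lemma pi_comp f g : A f -> A g -> pi (f \o g) = pi g * pi f.
Proof.
move=> Af Ag; apply/permP => i; rewrite permM !piE //; last exact: A_comp.
rewrite /pf; case ci: (canon i); last by rewrite ci.
rewrite (canon_idx Ag ci) /=; apply: idx_eq.
exact: eqm_hom (A_hom Af) (eqm_sym (idxP _)).
Qed.

Lemma pi_id : pi id = 1.
Proof.
apply/permP => i; rewrite perm1 piE; last exact: A_id.
by rewrite /pf; case ci: (canon i) => //; move: ci => /andP [/eqP].
Qed.

Lemma pi_eq f g : A f -> A g ->
  (pi f = pi g <-> forall x, P x -> eqm p m (f x) (g x)).
Proof.
move=> Af Ag; split.
- move=> e x Px; have := congr1 (fun s : {perm 'I_k} => s (idx x)) e => /=.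
  rewrite !piE // /pf canonE // => /idx_eqm e'.
  apply: eqm_trans (eqm_trans (eqm_sym (eqm_hom (A_hom Af) (idxP x))) e') _.
  exact: eqm_hom (A_hom Ag) (idxP x).
- move=> h; apply/permP => i; rewrite !piE // /pf.
  case ci: (canon i) => //; apply: idx_eq; apply: h.
  by move: ci => /andP [_ /asboolP].
Qed.

Lemma A_iter f n : A f -> A (iter n f).
Proof.
move=> Af; elim: n => [|n IH]; first exact: A_id.
have -> : iter n.+1 f = f \o iter n f by apply: funext => x.
exact: A_comp.
Qed.

Lemma pi_iter f n : A f -> pi (iter n f) = pi f ^+ n.
Proof.
move=> Af; elim: n => [|n IH]; first exact: pi_id.
have -> : iter n.+1 f = f \o iter n f by apply: funext => x.
rewrite pi_comp //; last exact: A_iter. by rewrite IH expgSr.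
Qed.

Definition Sgrp : {set {perm 'I_k}} :=
  [set t | `[< exists2 f, A f & pi f = t >]]%SET.

Lemma S_group : group_set Sgrp.
Proof.
apply/group_setP; split.
  by rewrite inE; apply/asboolP; exists id; [exact: A_id|exact: pi_id].
move=> s t; rewrite !inE => /asboolP [f Af <-] /asboolP [g Ag <-].
by apply/asboolP; exists (g \o f); [exact: A_comp|rewrite pi_comp].
Qed.

Lemma piS f : A f -> pi f \in Sgrp.
Proof. by move=> Af; rewrite inE; apply/asboolP; exists f. Qed.

Lemma S_order f : A f -> pi f ^+ #|Sgrp| = 1.
Proof.
move=> Af; have := @order_dvdG _ (Group S_group) (pi f) (piS Af).
by rewrite order_dvdn => /eqP.
Qed.

Lemma S_pgroup : prime p -> (forall f, A f -> exists e, pi f ^+ (p ^ e) = 1) ->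
  exists a, #|Sgrp| = (p ^ a)%N.
Proof.
move=> pp he.
have : p.-group (Group S_group).
  apply/pgroupP => q pq qS.
  have [x xS ox] := Cauchy pq qS.
  move: xS; rewrite inE => /asboolP [f Af fx].
  have [e fe] := he f Af.
  have : q %| p ^ e by rewrite -ox order_dvdn -fx fe.
  rewrite Euclid_dvdX // => /andP [qp _].
  by rewrite inE -(dvdn_prime2 pq pp).
by move=> /p_natP [a ha]; exists a.
Qed.

Variable U : Type.
Variable phi : (G -> G) -> U.
Hypothesis hphi : forall f g, A f -> A g ->
  (phi f = phi g <-> forall x, P x -> eqm p m (f x) (g x)).

Lemma card_phi : phi @` A #= `I_#|Sgrp|.
Proof.
have ch : forall u, exists f, (phi @` A) u -> A f /\ phi f = u.
  move=> u; case: (pselect ((phi @` A) u)) => [[f Af <-]|nu].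
    by exists f.
  by exists id.
have [chi hchi] := choice ch.
pose psi u := pi (chi u).
have psiI : {in phi @` A &, injective psi}.
  move=> u v /set_mem hu /set_mem hv e.
  have [Au <-] := hchi u hu; have [Av <-] := hchi v hv.
  by apply/(hphi Au Av); apply/(pi_eq Au Av).
have e1 := inj_card_eq psiI.
have e2 : psi @` (phi @` A) = [set t | t \in Sgrp].
  apply/seteqP; split.
    by move=> _ [u hu <-] /=; have [Au _] := hchi u hu; apply: piS.
  move=> t /=; rewrite inE => /asboolP [f Af <-].
  have hu : (phi @` A) (phi f) by exists f.
  exists (phi f) => //; have [Au e] := hchi _ hu.
  by rewrite /psi; apply/(pi_eq Au Af); apply/(hphi Au Af).
have e3 : [set t | t \in Sgrp] = (@enum_val _ (mem Sgrp)) @` [set: 'I_#|Sgrp|].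
  apply/seteqP; split.
    move=> t /= tS; exists (enum_rank_in tS t) => //; exact: enum_rankK_in.
  by move=> _ [i _ <-] /=; apply: enum_valP.
have e4 : (@enum_val _ (mem Sgrp)) @` [set: 'I_#|Sgrp|] #= [set: 'I_#|Sgrp|].
  by apply: inj_card_eq => i j _ _; apply: enum_val_inj.
apply: card_eq_trans (card_esym e1) _; rewrite e2 e3.
apply: card_eq_trans e4 _; exact: card_esym card_II.
Qed.

End PermModel.


Local Open Scope card_scope.

Section Final.
Variable G : groupType.
Variable p : nat.

Lemma theta_eq (Q : set G) M (f g : G -> G) :
  (fun x => [set y | Q x /\ lpc_aux p M ((f x)^-1 * y)]) =
  (fun x => [set y | Q x /\ lpc_aux p M ((g x)^-1 * y)]) <->
  (forall x, Q x -> eqm p M (f x) (g x)).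
Proof.
split.
- move=> e x Qx; have := congr1 (fun F => F x (g x)) e => /= e'.
  have : Q x /\ lpc_aux p M ((g x)^-1 * g x) by split => //; rewrite mulVg; apply: N1.
  by rewrite -e' => -[].
- move=> h; apply: funext => x; apply/seteqP; split => y /= [Qx hy]; split => //.
  + exact: eqm_trans (eqm_sym (h x Qx)) hy.
  + exact: eqm_trans (h x Qx) hy.
Qed.

Lemma sigma_eq M (f g : G -> G) :
  (fun x => [set y | lpc_aux p M ((f x)^-1 * y)]) =
  (fun x => [set y | lpc_aux p M ((g x)^-1 * y)]) <->
  (forall x, setT x -> eqm p M (f x) (g x)).
Proof.
split.
- move=> e x _; have := congr1 (fun F => F x (g x)) e => /= e'.
  have : lpc_aux p M ((g x)^-1 * g x) by rewrite mulVg; apply: N1.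
  by rewrite -e'.
- move=> h; apply: funext => x; apply/seteqP; split => y /= hy.
  + exact: eqm_trans (eqm_sym (h x I)) hy.
  + exact: eqm_trans (h x I) hy.
Qed.

Variable A : set (G -> G).
Hypothesis pp : prime p.
Hypothesis hA : aut_subgroup A.
Variable gens : seq G.
Hypothesis hgens : gen [set x | x \in gens] = setT.

Lemma cov m : exists r : seq G, forall x, exists2 y, y \in r & eqm p m y x.
Proof. have := cover (prime_gt1 pp) hgens m. by []. Qed.

Lemma step1 : finite_pgroup p (theta_image p 1 A) ->
  forall f, A f -> exists a, forall x, eqm p 1 x (iter (p ^ a) f x).
Proof.
move=> [a ha] f Af; have [r hr] := cov 1.
pose phi1 := fun (f : G -> G) =>
  (fun x => [set y | lpc_aux p 0 x /\ lpc_aux p 1 ((f x)^-1 * y)]).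
have hP1 : forall x y : G, eqm p 1 x y -> lpc_aux p 0 x -> lpc_aux p 0 y by [].
have hP2 : forall f, A f -> forall x : G, lpc_aux p 0 x -> lpc_aux p 0 (f x) by [].
have hphi : forall f g, A f -> A g ->
    (phi1 f = phi1 g <-> forall x, lpc_aux p 0 x -> eqm p 1 (f x) (g x)).
  by move=> f1 g1 _ _; apply: theta_eq.
have c := card_phi hr hA hP1 hP2 hphi.
have : `I_#|Sgrp p 1 (lpc_aux p 0) r A| #= `I_(p ^ a).
  by apply: card_eq_trans (card_esym c) _; exact: ha.
move=> /card_eq_II e.
exists a => x.
have := S_order hr hA hP1 hP2 Af; rewrite e -(pi_iter hr hA hP1 hP2 _ Af) -(pi_id hr hA hP1 hP2).
move=> /(pi_eq hr hA hP1 hP2 (A_iter hA _ Af) (A_id hA)) h.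
exact: eqm_sym (h x I).
Qed.

Lemma main_pg : finite_pgroup p (theta_image p 1 A) ->
  forall m (P : set G) (hP1 : forall x y, eqm p m x y -> P x -> P y)
    (hP2 : forall f, A f -> forall x, P x -> P (f x))
    U (phi : (G -> G) -> U),
  (forall f g, A f -> A g ->
     (phi f = phi g <-> forall x, P x -> eqm p m (f x) (g x))) ->
  finite_pgroup p (phi @` A).
Proof.
move=> H1 m P hP1 hP2 U phi hphi; have [r hr] := cov m.
have he : forall f, A f -> exists e, pi p m P r f ^+ (p ^ e) = 1.
  move=> f Af; have [a ha] := step1 H1 Af.
  have hg : hom (iter (p ^ a) f) by apply: hom_iter; apply: (A_hom hA).
  have triv : forall e, (forall x, eqm p m x (iter (p ^ e) f x)) ->
      pi p m P r f ^+ (p ^ e) = 1.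
    move=> e h; rewrite -(pi_iter hr hA hP1 hP2 _ Af) -(pi_id hr hA hP1 hP2).
    apply/(pi_eq hr hA hP1 hP2 (A_iter hA _ Af) (A_id hA)) => x _.
    exact: eqm_sym (h x).
  case: m hP1 hP2 hphi hr triv => [|j] hP1 hP2 hphi hr triv.
    by exists 0; apply: triv.
  exists (j + a); apply: triv => x.
  by rewrite expnD iter_mul; apply: Uiter.
have [b hb] := S_pgroup hr hA hP1 hP2 pp he.
exists b; rewrite -hb. by have := card_phi hr hA hP1 hP2 hphi.
Qed.

End Final.

Unset Implicit Arguments.

Theorem corollary3p5 (p : nat) (G : groupType) (A : set (G -> G)) :
  prime p -> finitely_generated G -> aut_subgroup A ->
  (finite_pgroup p (theta_image p 1 A) <->
     (forall n : nat, (0 < n)%N -> finite_pgroup p (theta_image p n A))) /\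
  (finite_pgroup p (theta_image p 1 A) <->
     (forall n : nat, (0 < n)%N -> finite_pgroup p (sigma_image p n A))).
Proof.
move=> pp [gens hgens] hA.
have hP1t : forall n (x y : G), eqm p n.+1 x y -> lpc_aux p n x -> lpc_aux p n y.
  by move=> n x y e Px; apply: eqm_N (eqm_sub e) Px.
have hP2t : forall n f, A f -> forall x : G, lpc_aux p n x -> lpc_aux p n (f x).
  by move=> n f Af x Px; apply: Nhom (A_hom hA Af) Px.
split; split.
- move=> H1 [//|n] _.
  have hphi : forall f g, A f -> A g ->
    ((fun x => [set y | lpc_aux p n x /\ lpc_aux p n.+1 ((f x)^-1 * y)]) =
     (fun x => [set y | lpc_aux p n x /\ lpc_aux p n.+1 ((g x)^-1 * y)]) <->
     forall x, lpc_aux p n x -> eqm p n.+1 (f x) (g x)).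
    by move=> f g _ _; apply: theta_eq.
  have := main_pg pp hA hgens H1 (hP1t n) (hP2t n) hphi.
  by [].
- by move=> H; apply: H.
- move=> H1 [//|n] _.
  have hP1 : forall x y : G, eqm p n x y -> setT x -> setT y by [].
  have hP2 : forall f, A f -> forall x, @setT G x -> setT (f x) by [].
  have hphi : forall f g, A f -> A g ->
    ((fun x => [set y | lpc_aux p n ((f x)^-1 * y)]) =
     (fun x => [set y | lpc_aux p n ((g x)^-1 * y)]) <->
     forall x, setT x -> eqm p n (f x) (g x)).
    by move=> f g _ _; apply: sigma_eq.
  have := main_pg pp hA hgens H1 hP1 hP2 hphi.
  by [].
- move=> H; have := H 2 isT.
  have -> : sigma_image p 2 A = theta_image p 1 A; last by [].
  rewrite /theta_image /sigma_image; congr (_ @` _).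
  apply: funext => f; apply: funext => x; apply/seteqP; split => y /=.
  + by move=> h; split.
  + by case.
Qed.
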